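(* Let $\alpha\in\mathbb{R}^2$, $\tau>0$ and $\varepsilon=1+\tau\chi_D$ on $Y_\infty$. Suppose $E\in\mathbf{L}^2_\alpha(Y_\infty)$ satisfies $\mathrm{div}(\varepsilon E)=0$ and $\mathrm{div}(\chi_DE)\ne0$. For $\eta>0$ set $\varepsilon'=\varepsilon+\eta\chi_D$, and let $p\in H^{1,-1}_\alpha(Y_\infty)/\mathbb{R}$ be the unique solution of $\mathrm{div}(\varepsilon'(E+\nabla p))=0$. Then $$\|E\|^2_{\varepsilon,Y_\infty}+\|\nabla p\|^2_{\varepsilon,Y_\infty}\,\frac{\|E\|_D}{\|\nabla p\|_D}\le\|E+\nabla p\|^2_{\varepsilon',Y_\infty}.$$
   Context: Geometry: - $\Lambda\subset\mathbb{R}^2$ is a lattice with fundamental cell $Y$; $Y_\infty=Y\times\mathbb{R}$. - $D\subset Y\times[-h,h]$ is a bounded smooth open set, and $\chi_D$ is its characteristic function (extended periodically). - A function $f$ is $\alpha$-quasi-periodic if $f(x+(\gamma,0))=e^{i\alpha\cdot\gamma}f(x)$ for $\gamma\in\Lambda$. Spaces and norms: - $\mathbf{L}^2_\alpha(Y_\infty)$ is the space of $\alpha$-quasi-periodic vector fields square integrable on $Y_\infty$. - $H^{1,-1}_\alpha(Y_\infty)=\{u\ \alpha\text{-quasi-periodic}:(1+|x_3|^2)^{-1/2}u\in L^2(Y_\infty),\ \nabla u\in L^2(Y_\infty)\}$. - For a weight $w$: $\|f\|^2_{w,Y_\infty}=\int_{Y_\infty}w|f|^2$, and $\|f\|_D^2=\int_D|f|^2$.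 *)

(* Defs.v *)
From HB Require Import structures.
From mathcomp Require Import all_boot all_order all_algebra.
From mathcomp Require Import all_classical all_reals all_analysis.
Set Implicit Arguments. Unset Strict Implicit. Unset Printing Implicit Defensive.
Import Order.TTheory GRing.Theory Num.Theory.
Import numFieldNormedType.Exports.
Local Open Scope classical_set_scope.
Local Open Scope ring_scope.

Section Defs.
Variable R : realType.

Definition pt := ((R * R) * R)%type.
(* complex numbers as pairs (real part, imaginary part) *)
Definition C := (R * R)%type.

Definition leb3 := (((@lebesgue_measure R) \x (@lebesgue_measure R)) \x (@lebesgue_measure R))%E.

Definition dot2 (u v : R * R) : R := u.1 * v.1 + u.2 * v.2.

(* multiplication by e^{i theta} *)
Definition crot (th : R) (z : C) : C :=
  (cos th * z.1 - sin th * z.2, sin th * z.1 + cos th * z.2).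

Definition lattice_pt (a b : R * R) (m n : int) : R * R :=
  (m%:~R * a.1 + n%:~R * b.1, m%:~R * a.2 + n%:~R * b.2).

Definition shift (x : pt) (g : R * R) : pt := ((x.1.1 + g.1, x.1.2 + g.2), x.2).

Definition cellY (a b : R * R) : set (R * R) :=
  [set y | exists s t : R, 0 <= s < 1 /\ 0 <= t < 1 /\
     y = (s * a.1 + t * b.1, s * a.2 + t * b.2)].
Definition Yinf (a b : R * R) : set pt := [set x | cellY a b x.1].

Definition qp_scalar (a b alpha : R * R) (f : pt -> C) : Prop :=
  forall (m n : int) (x : pt),
    f (shift x (lattice_pt a b m n)) = crot (dot2 alpha (lattice_pt a b m n)) (f x).
Definition qp_field (a b alpha : R * R) (F : pt -> 'I_3 -> C) : Prop :=
  forall j : 'I_3, qp_scalar a b alpha (fun x => F x j).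

(* pointwise Re and Im of F(x) . conj(G(x)), and |F(x)|^2 *)
Definition dotRe (F G : pt -> 'I_3 -> C) (x : pt) : R :=
  \sum_(j < 3) ((F x j).1 * (G x j).1 + (F x j).2 * (G x j).2).
Definition dotIm (F G : pt -> 'I_3 -> C) (x : pt) : R :=
  \sum_(j < 3) ((F x j).2 * (G x j).1 - (F x j).1 * (G x j).2).
Definition sqn (F : pt -> 'I_3 -> C) (x : pt) : R := dotRe F F x.

Definition addF (F G : pt -> 'I_3 -> C) : pt -> 'I_3 -> C :=
  fun x j => ((F x j).1 + (G x j).1, (F x j).2 + (G x j).2).

Definition wnorm2 (A : set pt) (w : pt -> R) (F : pt -> 'I_3 -> C) : R :=
  fine (\int[leb3]_(x in A) (w x * sqn F x)%:E)%E.

Definition meas_scalar (f : pt -> C) : Prop :=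
  measurable_fun setT (fun x => (f x).1) /\ measurable_fun setT (fun x => (f x).2).
Definition meas_field (F : pt -> 'I_3 -> C) : Prop :=
  forall j, meas_scalar (fun x => F x j).

Definition L2Y (a b : R * R) (F : pt -> 'I_3 -> C) : Prop :=
  meas_field F /\ (\int[leb3]_(x in Yinf a b) (sqn F x)%:E < +oo)%E.
Definition L2alpha (a b alpha : R * R) (F : pt -> 'I_3 -> C) : Prop :=
  qp_field a b alpha F /\ L2Y a b F.

Definition evec (j : 'I_3) : pt :=
  (((j == 0 :> nat)%:R, (j == 1 :> nat)%:R), (j == 2 :> nat)%:R).
Definition partial (j : 'I_3) (f : pt -> R) : pt -> R := fun x => 'D_(evec j) f x.

Fixpoint Ck (k : nat) (f : pt -> R) : Prop :=
  match k with
  | 0 => continuous f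
  | k'.+1 => (forall x, differentiable f x) /\ forall j, Ck k' (partial j f)
  end.
Definition test_fun (phi : pt -> R) : Prop :=
  (forall k, Ck k phi) /\ exists M : R, forall x : pt, M < `|x| -> phi x = 0.

Definition weak_grad (u : pt -> C) (G : pt -> 'I_3 -> C) : Prop :=
  forall phi, test_fun phi -> forall j : 'I_3,
    (\int[leb3]_x ((u x).1 * partial j phi x)%:E
       = - \int[leb3]_x ((G x j).1 * phi x)%:E)%E /\
    (\int[leb3]_x ((u x).2 * partial j phi x)%:E
       = - \int[leb3]_x ((G x j).2 * phi x)%:E)%E.

Definition H1m1 (a b alpha : R * R) (u : pt -> C) (G : pt -> 'I_3 -> C) : Prop :=
  qp_scalar a b alpha u /\ meas_scalar u /\
  (\int[leb3]_(x in Yinf a b)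
      (((1 + x.2 ^+ 2)^-1) * ((u x).1 ^+ 2 + (u x).2 ^+ 2))%:E < +oo)%E /\
  weak_grad u G /\ L2Y a b G.

(* weak form of  div(w F) = 0  on Y_infty:
   int_{Y_infty} w F . conj(grad q) = 0 for all q in H^{1,-1}_alpha *)
Definition div_free (a b alpha : R * R) (w : pt -> R) (F : pt -> 'I_3 -> C) : Prop :=
  forall q Gq, H1m1 a b alpha q Gq ->
    (\int[leb3]_(x in Yinf a b) (w x * dotRe F Gq x)%:E = 0)%E /\
    (\int[leb3]_(x in Yinf a b) (w x * dotIm F Gq x)%:E = 0)%E.

Definition Dper (a b : R * R) (D : set pt) : set pt :=
  [set x | exists m n : int, D (shift x (lattice_pt a b (- m) (- n)))].
Definition chiD (a b : R * R) (D : set pt) : pt -> R := \1_(Dper a b D).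

Definition bounded_set (D : set pt) : Prop := exists M : R, forall x, D x -> `|x| <= M.
Definition smooth_boundary (D : set pt) : Prop :=
  forall x0, (closure D `\` D) x0 ->
    exists (r : R) (psi : pt -> R), 0 < r /\ (forall k, Ck k psi) /\
      (exists j, partial j psi x0 != 0) /\
      forall x, ball x0 r x -> (D x <-> psi x < 0).
Definition smooth_domain (D : set pt) : Prop :=
  open D /\ bounded_set D /\ smooth_boundary D.

End Defs.

(* Main.v *)
Require Import Defs.
From HB Require Import structures.
From mathcomp Require Import all_boot all_order all_algebra.
From mathcomp Require Import all_classical all_reals all_analysis.
From mathcomp Require Import measurable_realfun ring lra zify.
Import Order.TTheory GRing.Theory Num.Theory.
Import numFieldNormedType.Exports.
Local Open Scope classical_set_scope.
Local Open Scope ring_scope.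

Section H.
Variable R : realType.
Local Notation T3 := ((measurableTypeR R * measurableTypeR R) * measurableTypeR R)%type.
Implicit Types (a b : R * R).

Lemma mfun11 : measurable_fun setT (fun x : T3 => x.1.1).
Proof. exact: measurableT_comp measurable_fst measurable_fst. Qed.
Lemma mfun12 : measurable_fun setT (fun x : T3 => x.1.2).
Proof. exact: measurableT_comp measurable_snd measurable_fst. Qed.
Lemma mfun2 : measurable_fun setT (fun x : T3 => x.2).
Proof. exact: measurable_snd. Qed.

Lemma cellY_iff a b y : a.1 * b.2 - a.2 * b.1 != 0 ->
  cellY a b y <->
  (0 <= (y.1 * b.2 - y.2 * b.1) / (a.1 * b.2 - a.2 * b.1) < 1 /\
   0 <= (a.1 * y.2 - a.2 * y.1) / (a.1 * b.2 - a.2 * b.1) < 1).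
Proof.
move=> hd; split.
  move=> [s [t [hs [ht ->]]]] /=.
  have -> : ((s * a.1 + t * b.1) * b.2 - (s * a.2 + t * b.2) * b.1) /
     (a.1 * b.2 - a.2 * b.1) = s by field.
  have -> : (a.1 * (s * a.2 + t * b.2) - a.2 * (s * a.1 + t * b.1)) /
     (a.1 * b.2 - a.2 * b.1) = t by field.
  by [].
move=> [hs ht].
exists ((y.1 * b.2 - y.2 * b.1) / (a.1 * b.2 - a.2 * b.1)).
exists ((a.1 * y.2 - a.2 * y.1) / (a.1 * b.2 - a.2 * b.1)).
split => //; split => //.
case: y {hs ht} => y1 y2 /=; congr pair; field => //.
Qed.

Lemma meas_Yinf a b : a.1 * b.2 - a.2 * b.1 != 0 -> measurable (Yinf a b : set T3).
Proof.
move=> hd.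
pose S := fun x : T3 => (x.1.1 * b.2 - x.1.2 * b.1) / (a.1 * b.2 - a.2 * b.1).
pose T := fun x : T3 => (a.1 * x.1.2 - a.2 * x.1.1) / (a.1 * b.2 - a.2 * b.1).
have mS : measurable_fun setT S.
  apply: measurable_funM; last exact: measurable_cst.
  apply: measurable_funB; apply: measurable_funM; try exact: measurable_cst.
    exact: mfun11.
  exact: mfun12.
have mT : measurable_fun setT T.
  apply: measurable_funM; last exact: measurable_cst.
  apply: measurable_funB; apply: measurable_funM; try exact: measurable_cst.
    exact: mfun12.
  exact: mfun11.
have -> : Yinf a b = S @^-1` `[0, 1[ `&` T @^-1` `[0, 1[.
  apply/seteqP; split => x; rewrite /Yinf /=.
    by move/(@cellY_iff a b x.1 hd) => [h1 h2]; rewrite !in_itv /=.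
  by rewrite !in_itv /= => -[h1 h2]; apply/(@cellY_iff a b x.1 hd).
apply: measurableI.
  by rewrite -[X in measurable X]setTI; apply: mS => //; exact: measurable_itv.
by rewrite -[X in measurable X]setTI; apply: mT => //; exact: measurable_itv.
Qed.


End H.

Section H.
Variable R : realType.
Local Notation T3 := ((measurableTypeR R * measurableTypeR R) * measurableTypeR R)%type.

Definition box3 (q1 q2 q3 r : rat) : set (pt R) :=
  ([set` `]ratr q1 - ratr r, ratr q1 + ratr r[] `*`
   [set` `]ratr q2 - ratr r, ratr q2 + ratr r[]) `*`
   [set` `]ratr q3 - ratr r, ratr q3 + ratr r[].

Definition boxF (D : set (pt R)) (q1 q2 q3 r : rat) : set (pt R) :=
  if `[< box3 q1 q2 q3 r `<=` D >] then box3 q1 q2 q3 r else set0.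

Lemma rat_near (x r : R) : 0 < r -> exists q : rat, x - r < ratr q < x + r.
Proof.
move=> r0; have : x - r < x + r by lra.
by move=> /rat_in_itvoo [q]; rewrite in_itv /= => h; exists q.
Qed.

Lemma open_bigcup3 (D : set (pt R)) : open D -> D = \bigcup_(q1 : rat) \bigcup_(q2 : rat) \bigcup_(q3 : rat)
   \bigcup_(r : rat) boxF D q1 q2 q3 r.
Proof.
move=> oD.
  apply/seteqP; split => x.
    move=> Dx. have := oD x Dx. move=> /nbhs_ballP [e e0 He]; rewrite /= in e0.
    have [r rr] : exists r : rat, (0 : R) < ratr r < e / 2.
      have : (0 : R) < e / 2 by lra.
      by move=> /rat_in_itvoo [q]; rewrite in_itv /= => h; exists q.
    move/andP: rr => [r0 r1].
    have [q1 /andP [h11 h12]] := @rat_near x.1.1 _ r0.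
    have [q2 /andP [h21 h22]] := @rat_near x.1.2 _ r0.
    have [q3 /andP [h31 h32]] := @rat_near x.2 _ r0.
    exists q1 => //; exists q2 => //; exists q3 => //; exists r => //.
    have sub : box3 q1 q2 q3 r `<=` D.
      move=> [[y1 y2] y3]; rewrite /box3 /= !in_itv /= => -[[/andP [g11 g12] /andP [g21 g22]] /andP [g31 g32]].
      apply: He; rewrite /ball /= /prod_ball /= /ball /= /prod_ball /= /ball /=.
      by rewrite !ltr_norml; split; [split|]; apply/andP; split; lra.
    rewrite /boxF asboolT //.
    by rewrite /box3 /= !in_itv /=; split; [split|]; apply/andP; split; lra.
  move=> [q1 _ [q2 _ [q3 _ [r _]]]]; rewrite /boxF.
  by case: asboolP => [sub /sub|].
Qed.

Lemma open_meas3 (D : set (pt R)) : open D -> measurable (D : set T3).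
Proof.
move=> /open_bigcup3 ->.
apply: bigcupT_measurable_rat => q1; apply: bigcupT_measurable_rat => q2.
apply: bigcupT_measurable_rat => q3; apply: bigcupT_measurable_rat => r.
rewrite /boxF; case: asboolP => _ //.
by apply: measurableX; [apply: measurableX|]; exact: measurable_itv.
Qed.
End H.

Section H.
Variable R : realType.
Implicit Types (a b : R * R).

Lemma int_small (m : int) : -1 < (m%:~R : R) < 1 -> m = 0.
Proof.
move=> /andP [h1 h2].
have h1' : (-1 : int) < m.
  by rewrite -(ltr_int R) (_ : (-1 : int)%:~R = -1 :> R) // ?mulrN1z.
have h2' : m < 1.
  by rewrite -(ltr_int R).
lia.
Qed.

Lemma shift00 a b (x : pt R) : Defs.shift x (lattice_pt a b (- 0) (- 0)) = x.
Proof.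
case: x => [[x1 x2] x3]; rewrite /Defs.shift /lattice_pt /= oppr0 mulr0z !mul0r !addr0.
by [].
Qed.

Lemma chiD_Y a b (D : set (pt R)) (x : pt R) : a.1 * b.2 - a.2 * b.1 != 0 ->
  D `<=` Yinf a b -> Yinf a b x -> chiD a b D x = \1_D x.
Proof.
move=> hd DY Yx.
have E : (x \in Dper a b D) = (x \in D).
  apply/idP/idP => /set_mem h; apply/mem_set.
  case: h => m [n Dy].
  have := DY _ Dy; rewrite /Yinf /= => /(@cellY_iff R a b _ hd) [/andP [hs1 hs2] /andP [ht1 ht2]].
  move: Yx; rewrite /Yinf /= => /(@cellY_iff R a b _ hd) [/andP [hs1' hs2'] /andP [ht1' ht2']].
  move: hs1 hs2 ht1 ht2; rewrite /lattice_pt /= => hs1 hs2 ht1 ht2.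
  have e1 : ((x.1.1 + ((- m)%:~R * a.1 + (- n)%:~R * b.1)) * b.2 -
            (x.1.2 + ((- m)%:~R * a.2 + (- n)%:~R * b.2)) * b.1) /
            (a.1 * b.2 - a.2 * b.1) =
          (x.1.1 * b.2 - x.1.2 * b.1) / (a.1 * b.2 - a.2 * b.1) - m%:~R.
    rewrite !mulrNz; field => //.
  have e2 : (a.1 * (x.1.2 + ((- m)%:~R * a.2 + (- n)%:~R * b.2)) -
             a.2 * (x.1.1 + ((- m)%:~R * a.1 + (- n)%:~R * b.1))) /
            (a.1 * b.2 - a.2 * b.1) =
          (a.1 * x.1.2 - a.2 * x.1.1) / (a.1 * b.2 - a.2 * b.1) - n%:~R.
    rewrite !mulrNz; field => //.
  rewrite e1 in hs1 hs2; rewrite e2 in ht1 ht2.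
  have m0 : m = 0 by apply: int_small; apply/andP; split; lra.
  have n0 : n = 0 by apply: int_small; apply/andP; split; lra.
  by move: Dy; rewrite m0 n0 shift00.
by exists 0, 0; rewrite shift00.
by rewrite /chiD !indicE E.
Qed.
End H.

Section H.
Variable R : realType.
Local Notation T3 := ((measurableTypeR R * measurableTypeR R) * measurableTypeR R)%type.
Variable Y : set T3.
Hypothesis mY : measurable Y.
Local Notation int f := ((@leb3 R).-integrable Y (EFin \o f)).

Lemma intD' (f g : pt R -> R) : int f -> int g -> int (fun x => f x + g x).
Proof.
move=> hf hg.
have -> : EFin \o (fun x => f x + g x) = ((EFin \o f) \+ (EFin \o g))%E by [].
exact: integrableD.
Qed.

Lemma intZ' (c : R) (f : pt R -> R) : int f -> int (fun x => c * f x).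
Proof.
move=> hf.
have -> : EFin \o (fun x => c * f x) = (fun x => c%:E * (EFin \o f) x)%E by [].
exact: integrableZl.
Qed.

Lemma RintD' (f g : pt R -> R) : int f -> int g ->
  Rintegral (@leb3 R) Y (fun x => f x + g x) = Rintegral (@leb3 R) Y f + Rintegral (@leb3 R) Y g.
Proof. by move=> hf hg; rewrite RintegralD. Qed.

Lemma RintZ' (c : R) (f : pt R -> R) : int f ->
  Rintegral (@leb3 R) Y (fun x => c * f x) = c * Rintegral (@leb3 R) Y f.
Proof. by move=> hf; rewrite RintegralZl. Qed.

Lemma meas_dot (F G : pt R -> 'I_3 -> C R) : meas_field F -> meas_field G ->
  measurable_fun setT (dotRe F G : T3 -> R).
Proof.
move=> hF hG; rewrite /dotRe.
apply: measurable_sum => j.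
have [h1 h2] := hF j; have [g1 g2] := hG j.
by apply: measurable_funD; apply: measurable_funM.
Qed.


Lemma sqn_ge0 (F : pt R -> 'I_3 -> C R) x : 0 <= sqn F x.
Proof.
rewrite /sqn /dotRe; apply: sumr_ge0 => j _.
by apply: addr_ge0; rewrite -expr2 sqr_ge0.
Qed.

Lemma int_sqn (F : pt R -> 'I_3 -> C R) : meas_field F ->
  (\int[@leb3 R]_(x in Y) (sqn F x)%:E < +oo)%E -> int (sqn F).
Proof.
move=> hF hI; apply/integrableP; split.
  apply/measurable_EFinP; apply: (measurable_funS measurableT) => //; exact: meas_dot.
rewrite (@eq_integral _ _ _ _ _ (fun x : T3 => (sqn F x)%:E)) // => x _.
by rewrite /= ger0_norm // sqn_ge0.
Qed.

Lemma dot_bound (F G : pt R -> 'I_3 -> C R) x :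
  `|dotRe F G x| <= sqn F x + sqn G x.
Proof.
rewrite /sqn /dotRe -big_split /=.
apply: le_trans (ler_norm_sum _ _ _) _.
apply: ler_sum => j _.
set u1 := (F x j).1; set u2 := (F x j).2; set v1 := (G x j).1; set v2 := (G x j).2.
have h1 := sqr_ge0 (u1 + v1); have h2 := sqr_ge0 (u1 - v1).
have h3 := sqr_ge0 (u2 + v2); have h4 := sqr_ge0 (u2 - v2).
have h5 := sqr_ge0 u1; have h6 := sqr_ge0 u2; have h7 := sqr_ge0 v1; have h8 := sqr_ge0 v2.
rewrite ler_norml; apply/andP; split; nra.
Qed.

Lemma int_dot (F G : pt R -> 'I_3 -> C R) : meas_field F -> meas_field G ->
  int (sqn F) -> int (sqn G) -> int (dotRe F G).
Proof.
move=> hF hG iF iG.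
have iFG := intD' _ _ iF iG.
apply: (le_integrable mY _ _ iFG).
  apply/measurable_EFinP; apply: (measurable_funS measurableT) => //; exact: meas_dot.
move=> x _ /=; rewrite lee_fin (ger0_norm (addr_ge0 (sqn_ge0 _ _) (sqn_ge0 _ _))).
exact: dot_bound.
Qed.

Arguments intD' {f g}. Arguments intZ' c {f}. Arguments RintD' {f g}. Arguments RintZ' c {f}.
Lemma lin6 (f1 f2 f3 f4 f5 f6 : pt R -> R) :
  int f1 -> int f2 -> int f3 -> int f4 -> int f5 -> int f6 -> forall (c1 c2 c3 c4 c5 c6 : R),
  Rintegral (@leb3 R) Y (fun x => c1 * f1 x + c2 * f2 x + c3 * f3 x + c4 * f4 x + c5 * f5 x + c6 * f6 x)
  = c1 * Rintegral (@leb3 R) Y f1 + c2 * Rintegral (@leb3 R) Y f2 + c3 * Rintegral (@leb3 R) Y f3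
    + c4 * Rintegral (@leb3 R) Y f4 + c5 * Rintegral (@leb3 R) Y f5 + c6 * Rintegral (@leb3 R) Y f6.
Proof.
move=> i1 i2 i3 i4 i5 i6 c1 c2 c3 c4 c5 c6.
have j1 := intZ' c1 i1; have j2 := intZ' c2 i2; have j3 := intZ' c3 i3.
have j4 := intZ' c4 i4; have j5 := intZ' c5 i5; have j6 := intZ' c6 i6.
have k2 := intD' j1 j2. have k3 := intD' k2 j3. have k4 := intD' k3 j4.
have k5 := intD' k4 j5.
rewrite (RintD' k5 j6) (RintD' k4 j5) (RintD' k3 j4) (RintD' k2 j3) (RintD' j1 j2).
by rewrite (RintZ' _ i1) (RintZ' _ i2) (RintZ' _ i3) (RintZ' _ i4) (RintZ' _ i5) (RintZ' _ i6).
Qed.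

Variable D : set T3.
Hypothesis mD : measurable D.

Lemma int_ind (f : pt R -> R) : int f -> int (fun x => \1_D x * f x).
Proof.
move=> hf.
have mf : measurable_fun Y f.
  by move/integrableP: hf => [/measurable_EFinP].
apply: (le_integrable mY _ _ hf).
  apply/measurable_EFinP; apply: measurable_funM => //.

move=> x _ /=; rewrite lee_fin normrM.
rewrite indicE; case: (x \in D) => /=; rewrite ?normr1 ?normr0 ?mul1r ?mul0r //.
Qed.
End H.

Section H.
Variable R : realType.

Lemma cs_real (A B C : R) : 0 <= A -> 0 <= C ->
  (forall t, 0 < t -> 0 <= t ^+ 2 * A + 2 * t * B + C) ->
  - B <= Num.sqrt A * Num.sqrt C.
Proof.
move=> A0 C0 H.
have uv0 : 0 <= Num.sqrt A * Num.sqrt C by apply: mulr_ge0; exact: sqrtr_ge0.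
have [B0|Bn] := leP 0 B; first lra.
have eA : A = Num.sqrt A ^+ 2 by rewrite sqr_sqrtr.
have eC : C = Num.sqrt C ^+ 2 by rewrite sqr_sqrtr.
set u := Num.sqrt A in eA uv0 *; set v := Num.sqrt C in eC uv0 *.
have u0 : 0 <= u by exact: sqrtr_ge0.
have v0 : 0 <= v by exact: sqrtr_ge0.
have [u0'|upos] := eqVneq u 0.
  have tpos : 0 < (C + 1) / (- B) by apply: divr_gt0; lra.
  have := H _ tpos.
  rewrite eA u0' expr0n /= mulr0 add0r.
  have -> : 2 * ((C + 1) / - B) * B = - 2 * (C + 1) by field; rewrite ?oppr_eq0 ltr0_neq0.
  move=> *; exfalso; lra.
have upos' : 0 < u by rewrite lt_def upos u0.
have [v0'|vpos] := eqVneq v 0.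
  have tpos : 0 < (- B) / A by apply: divr_gt0; [lra| rewrite eA exprn_gt0].
  have := H _ tpos.
  rewrite eC v0' expr0n /= addr0 eA.
  have -> : (- B / u ^+ 2) ^+ 2 * u ^+ 2 + 2 * (- B / u ^+ 2) * B = - (B ^+ 2 / u ^+ 2).
    by field.
  have : 0 < B ^+ 2 / u ^+ 2.
    by apply: divr_gt0; [rewrite exprn_even_gt0 //; lra | rewrite exprn_gt0].
  move=> *; exfalso; lra.
have vpos' : 0 < v by rewrite lt_def vpos v0.
have := H (v / u) (divr_gt0 vpos' upos').
rewrite eA eC.
have -> : (v / u) ^+ 2 * u ^+ 2 + 2 * (v / u) * B + v ^+ 2 = 2 * v / u * (u * v + B).
  by field; exact: upos.
move=> h.
have : 0 <= u * v + B.
  rewrite -(pmulr_rge0 _ (divr_gt0 (mulr_gt0 (ltr0n _ 2) vpos') upos')) //.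
lra.
Qed.
End H.

Section H.
Variable R : realType.

Lemma final_ineq (IE IG IEG JE JG JEG tau eta : R) : 0 < tau -> 0 < eta -> 0 <= JE -> 0 <= JG ->
  IEG + tau * JEG = 0 -> IEG + IG + (tau + eta) * (JEG + JG) = 0 ->
  - JEG <= Num.sqrt JE * Num.sqrt JG ->
  (IE + tau * JE) + (IG + tau * JG) * (Num.sqrt JE / Num.sqrt JG)
  <= IE + 2 * IEG + IG + (tau + eta) * (JE + 2 * JEG + JG).
Proof.
move=> t0 e0 JE0 JG0 h1 h2 cs.
have eIEG : IEG = - tau * JEG by lra.
have eIG : IG = - IEG - (tau + eta) * (JEG + JG) by lra.
rewrite eIG eIEG.
have eA : JE = Num.sqrt JE ^+ 2 by rewrite sqr_sqrtr.
have eC : JG = Num.sqrt JG ^+ 2 by rewrite sqr_sqrtr.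
set u := Num.sqrt JE in eA cs *; set v := Num.sqrt JG in eC cs *.
have u0 : 0 <= u by exact: sqrtr_ge0.
have v0 : 0 <= v by exact: sqrtr_ge0.
rewrite eA eC.
have [v0'|vpos] := eqVneq v 0.
  rewrite v0' invr0 !mulr0.
  rewrite v0' mulr0 in cs.
  have := sqr_ge0 u => hu.
  have cs' : 0 <= JEG by lra.
  have h := mulr_ge0 (ltW e0) (addr_ge0 hu cs').
  nra.
have vpos' : 0 < v by rewrite lt_def vpos v0.
set s := u / v.
have us : u = s * v by rewrite /s divfK.
have s0 : 0 <= s by apply: divr_ge0.
rewrite us; rewrite us in cs.
have hh : 0 <= JEG + s * v * v by lra.
have h := mulr_ge0 (ltW e0) (mulr_ge0 hh (addr_ge0 ler01 s0)).
nra.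
Qed.
End H.

Section H.
Variable R : realType.
Local Notation T3 := ((measurableTypeR R * measurableTypeR R) * measurableTypeR R)%type.

Lemma dotRe_addF (E G : pt R -> 'I_3 -> C R) x :
  dotRe (addF E G) G x = dotRe E G x + sqn G x.
Proof.
rewrite /sqn /dotRe /addF -big_split /=; apply: eq_bigr => j _ /=; ring.
Qed.

Lemma sqn_addF (E G : pt R -> 'I_3 -> C R) x :
  sqn (addF E G) x = sqn E x + 2 * dotRe E G x + sqn G x.
Proof.
rewrite /sqn /dotRe /addF mulr_sumr -!big_split /=; apply: eq_bigr => j _ /=; ring.
Qed.

Lemma cs_pt (E G : pt R -> 'I_3 -> C R) x t :
  0 <= t ^+ 2 * sqn E x + 2 * t * dotRe E G x + sqn G x.
Proof.
rewrite /sqn /dotRe !mulr_sumr -!big_split /=; apply: sumr_ge0 => j _ /=.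
set u1 := (E x j).1; set u2 := (E x j).2; set v1 := (G x j).1; set v2 := (G x j).2.
have -> : t ^+ 2 * (u1 * u1 + u2 * u2) + 2 * t * (u1 * v1 + u2 * v2) + (v1 * v1 + v2 * v2)
  = (t * u1 + v1) ^+ 2 + (t * u2 + v2) ^+ 2 by ring.
by apply: addr_ge0; exact: sqr_ge0.
Qed.

Lemma int_on_D (D Y : set T3) (f : pt R -> R) : D `<=` Y ->
  Rintegral (@leb3 R) D f = Rintegral (@leb3 R) Y (fun x => \1_D x * f x).
Proof.
move=> DY; rewrite /Rintegral; congr fine.
rewrite integral_mkcond [RHS]integral_mkcond; congr integral.
apply/funext => x; rewrite /patch /=.
case: (boolP (x \in D)) => xD.
  by rewrite (mem_set (DY _ (set_mem xD))) indicE xD mul1r.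
case: (x \in Y) => //; by rewrite indicE (negbTE xD) mul0r.
Qed.
End H.


Theorem lemmaA2 (R : realType) (a b : R * R) (h : R) (D : set (pt R))
  (alpha : R * R) (tau eta : R) (E : pt R -> 'I_3 -> C R)
  (p : pt R -> C R) (Gp : pt R -> 'I_3 -> C R) :
  a.1 * b.2 - a.2 * b.1 != 0 ->
  0 < h ->
  smooth_domain D ->
  D `<=` [set x | cellY a b x.1 /\ - h <= x.2 <= h] ->
  0 < tau ->
  let eps := fun x => 1 + tau * chiD a b D x in
  L2alpha a b alpha E ->
  div_free a b alpha eps E ->
  ~ div_free a b alpha (chiD a b D) E ->
  0 < eta ->
  let eps' := fun x => eps x + eta * chiD a b D x in
  H1m1 a b alpha p Gp ->
  div_free a b alpha eps' (addF E Gp) ->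
  wnorm2 (Yinf a b) eps E
    + wnorm2 (Yinf a b) eps Gp
      * (Num.sqrt (wnorm2 D (fun=> 1) E) / Num.sqrt (wnorm2 D (fun=> 1) Gp))
  <= wnorm2 (Yinf a b) eps' (addF E Gp).
Proof.
move=> hd h0 sD DY' tau0 eps LE divE _ eta0 eps' Hp divF.
have mY : measurable (Yinf a b : set ((measurableTypeR R * measurableTypeR R) * measurableTypeR R)%type).
  exact: meas_Yinf.
have mD : measurable (D : set ((measurableTypeR R * measurableTypeR R) * measurableTypeR R)%type).
  exact: open_meas3 sD.1.
have DY : D `<=` Yinf a b by move=> x /DY' [].
have chi : forall x, Yinf a b x -> chiD a b D x = \1_D x.
  by move=> x Yx; apply: chiD_Y.
have mE : meas_field E := LE.2.1.
have mG : meas_field Gp := Hp.2.2.2.2.1.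
have iE : (@leb3 R).-integrable (Yinf a b) (EFin \o sqn E).
  by apply: int_sqn => //; exact: LE.2.2.
have iG : (@leb3 R).-integrable (Yinf a b) (EFin \o sqn Gp).
  by apply: int_sqn => //; exact: Hp.2.2.2.2.2.
have iEG : (@leb3 R).-integrable (Yinf a b) (EFin \o dotRe E Gp).
  by apply: int_dot.
pose DfE := fun x => \1_D x * sqn E x.
pose DfG := fun x => \1_D x * sqn Gp x.
pose DfEG := fun x => \1_D x * dotRe E Gp x.
have iDE : (@leb3 R).-integrable (Yinf a b) (EFin \o DfE) by exact: int_ind.
have iDG : (@leb3 R).-integrable (Yinf a b) (EFin \o DfG) by exact: int_ind.
have iDEG : (@leb3 R).-integrable (Yinf a b) (EFin \o DfEG) by exact: int_ind.
have L := lin6 _ _ mY _ _ _ _ _ _ iE iG iEG iDE iDG iDEG.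
have W1 : wnorm2 (Yinf a b) eps E = Rintegral (@leb3 R) (Yinf a b)
  (fun x => 1 * sqn E x + 0 * sqn Gp x + 0 * dotRe E Gp x + tau * DfE x + 0 * DfG x + 0 * DfEG x).
  apply: eq_Rintegral => x /set_mem Yx; rewrite /eps chi // /DfE /DfG /DfEG; ring.
rewrite L in W1.
have W2 : wnorm2 (Yinf a b) eps Gp = Rintegral (@leb3 R) (Yinf a b)
  (fun x => 0 * sqn E x + 1 * sqn Gp x + 0 * dotRe E Gp x + 0 * DfE x + tau * DfG x + 0 * DfEG x).
  apply: eq_Rintegral => x /set_mem Yx; rewrite /eps chi // /DfE /DfG /DfEG; ring.
rewrite L in W2.
have W3 : wnorm2 (Yinf a b) eps' (addF E Gp) = Rintegral (@leb3 R) (Yinf a b)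
  (fun x => 1 * sqn E x + 1 * sqn Gp x + 2 * dotRe E Gp x + (tau + eta) * DfE x
     + (tau + eta) * DfG x + (2 * (tau + eta)) * DfEG x).
  apply: eq_Rintegral => x /set_mem Yx; rewrite /eps' /eps chi // /DfE /DfG /DfEG sqn_addF; ring.
rewrite L in W3.
have W4 : wnorm2 D (fun=> 1) E = Rintegral (@leb3 R) (Yinf a b)
  (fun x => 0 * sqn E x + 0 * sqn Gp x + 0 * dotRe E Gp x + 1 * DfE x + 0 * DfG x + 0 * DfEG x).
  transitivity (Rintegral (@leb3 R) D (fun x => 1 * sqn E x)); first by [].
  rewrite (@int_on_D R D (Yinf a b)) //.
  apply: eq_Rintegral => x _; rewrite /DfE; ring.
rewrite L in W4.
have W5 : wnorm2 D (fun=> 1) Gp = Rintegral (@leb3 R) (Yinf a b)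
  (fun x => 0 * sqn E x + 0 * sqn Gp x + 0 * dotRe E Gp x + 0 * DfE x + 1 * DfG x + 0 * DfEG x).
  transitivity (Rintegral (@leb3 R) D (fun x => 1 * sqn Gp x)); first by [].
  rewrite (@int_on_D R D (Yinf a b)) //.
  apply: eq_Rintegral => x _; rewrite /DfG; ring.
rewrite L in W5.
have D1 : 0 = Rintegral (@leb3 R) (Yinf a b)
  (fun x => 0 * sqn E x + 0 * sqn Gp x + 1 * dotRe E Gp x + 0 * DfE x + 0 * DfG x + tau * DfEG x).
  have h1 := (divE p Gp Hp).1.
  transitivity (Rintegral (@leb3 R) (Yinf a b) (fun x => eps x * dotRe E Gp x)).
    by rewrite /Rintegral h1.
  apply: eq_Rintegral => x /set_mem Yx; rewrite /eps chi // /DfE /DfG /DfEG; ring.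
rewrite L in D1.
have D2 : 0 = Rintegral (@leb3 R) (Yinf a b)
  (fun x => 0 * sqn E x + 1 * sqn Gp x + 1 * dotRe E Gp x + 0 * DfE x + (tau + eta) * DfG x
    + (tau + eta) * DfEG x).
  have h1 := (divF p Gp Hp).1.
  transitivity (Rintegral (@leb3 R) (Yinf a b) (fun x => eps' x * dotRe (addF E Gp) Gp x)).
    by rewrite /Rintegral h1.
  apply: eq_Rintegral => x /set_mem Yx; rewrite /eps' /eps chi // /DfE /DfG /DfEG dotRe_addF; ring.
rewrite L in D2.
have CS : forall t, 0 < t -> 0 <= Rintegral (@leb3 R) (Yinf a b)
  (fun x => 0 * sqn E x + 0 * sqn Gp x + 0 * dotRe E Gp x + t ^+ 2 * DfE x + 1 * DfG x
    + (2 * t) * DfEG x).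
  move=> t t0; apply: Rintegral_ge0 => x _; rewrite /DfE /DfG /DfEG indicE.
  case: (x \in D); rewrite /= ?mul1r ?mul0r ?mulr0 ?addr0 ?add0r //.
  have := cs_pt _ E Gp x t; lra.
have JE0 : 0 <= Rintegral (@leb3 R) (Yinf a b) DfE.
  apply: Rintegral_ge0 => x _; rewrite /DfE; apply: mulr_ge0; last exact: sqn_ge0.
  by rewrite indicE; case: (x \in D).
have JG0 : 0 <= Rintegral (@leb3 R) (Yinf a b) DfG.
  apply: Rintegral_ge0 => x _; rewrite /DfG; apply: mulr_ge0; last exact: sqn_ge0.
  by rewrite indicE; case: (x \in D).
rewrite W1 W2 W3 W4 W5.
move: L W1 W2 W3 W4 W5 D1 D2 CS JE0 JG0.
set IE := Rintegral (@leb3 R) (Yinf a b) (sqn E).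
set IG := Rintegral (@leb3 R) (Yinf a b) (sqn Gp).
set IEG := Rintegral (@leb3 R) (Yinf a b) (dotRe E Gp).
set JE := Rintegral (@leb3 R) (Yinf a b) DfE.
set JG := Rintegral (@leb3 R) (Yinf a b) DfG.
set JEG := Rintegral (@leb3 R) (Yinf a b) DfEG.
move=> L _ _ _ _ _ D1 D2 CS JE0 JG0.
have cs : - JEG <= Num.sqrt JE * Num.sqrt JG.
  apply: cs_real => // t t0; have := CS t t0; rewrite L; lra.
have e1 : IEG + tau * JEG = 0 by lra.
have e2 : IEG + IG + (tau + eta) * (JEG + JG) = 0 by lra.
have := final_ineq _ IE IG IEG JE JG JEG tau eta tau0 eta0 JE0 JG0 e1 e2 cs.
rewrite (_ : 0 * IE + 0 * IG + 0 * IEG + 1 * JE + 0 * JG + 0 * JEG = JE); last by ring.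
rewrite (_ : 0 * IE + 0 * IG + 0 * IEG + 0 * JE + 1 * JG + 0 * JEG = JG); last by ring.
lra.
Qed.
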